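(* Let $T$ be a locally finite, infinite tree with root $o$ such that every vertex has forward degree at least $2$. Let $d$ be an ultrametric on $\partial T$ whose closed balls (of positive radius) are exactly the sets $\partial T_x$, $x \in T$. Then there is an ultrametric element $\phi$ on $T$ such that $d = d_{\phi}$.
   Context: $T$ is identified with its vertex set. For $x \neq o$, $x^-$ denotes the neighbour of $x$ on the geodesic from $o$ to $x$; the forward degree of $x$ is $\deg^+(x) = |\{y \in T : y^- = x\}|$. A ray is a one-sided infinite path of distinct successive neighbours; two rays are equivalent if their symmetric difference is finite; an end is an equivalence class of rays, and $\partial T$ is the set of ends. For $\xi\in\partial T$, $\pi(o,\xi)$ is the unique ray from $o$ representing $\xi$. For $x \in T$, $T_x = \{y \in T : x \text{ lies on the geodesic from } o \text{ to } y\}$ and $\partial T_x$ is the set of ends having a representative ray inside $T_x$. For distinct $\xi,\eta \in \partial T$, the confluent $\xi \wedge \eta$ is the last common vertex of the rays $\pi(o,\xi)$ and $\pi(o,\eta)$. An ultrametric element is a function $\phi : T \to (0,\infty)$ with (i) $\phi(x^-) > \phi(x)$ for every $x \neq o$ and (ii) $\phi(x_n) \to 0$ along every geodesic ray $[x_0,x_1,x_2,\dots]$. It induces the ultrametric $d_\phi$ on $\partial T$ given by $d_\phi(\xi,\xi)=0$ and $d_\phi(\xi,\eta) = \phi(\xi\wedge\eta)$ for $\xi \neq \eta$. *)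

(* Defs.v *)
(* A rooted tree (T, o) is given by its vertex type V, the root o
   and the predecessor map x |-> x^- (par), with par o = o by convention. *)
From Stdlib Require Import Reals List.
Open Scope R_scope.

Set Implicit Arguments.
Section Tree.
Variables (V : Type) (o : V) (par : V -> V).

Definition rooted_tree : Prop :=
  par o = o /\ forall x, exists n, Nat.iter n par x = o.

Definition child (x y : V) : Prop := y <> o /\ par y = x.

Definition adj (x y : V) : Prop := child x y \/ child y x.

Definition locally_finite : Prop :=
  forall x, exists l : list V, forall y, adj x y -> In y l.

Definition infinite_tree : Prop := ~ exists l : list V, forall x, In x l.

Definition fdeg_ge2 (x : V) : Prop :=
  exists y1 y2, y1 <> y2 /\ child x y1 /\ child x y2.

Definition ray (r : nat -> V) : Prop :=
  (forall m n, r m = r n -> m = n) /\ forall n, adj (r n) (r (S n)).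

Definition in_range (r : nat -> V) (v : V) : Prop := exists n, r n = v.

Definition ray_equiv (r s : nat -> V) : Prop :=
  exists l : list V, forall v, (in_range r v /\ ~ in_range s v \/
                                in_range s v /\ ~ in_range r v) -> In v l.

Definition ray_from_o (r : nat -> V) : Prop :=
  r 0%nat = o /\ forall n, child (r n) (r (S n)).

(* the space of ends, each end identified with its unique representative ray from o *)
Definition End_ := { r : nat -> V | ray_from_o r }.

Definition subtree (x y : V) : Prop := exists n, Nat.iter n par y = x.

Definition bdry_sub (x : V) (xi : End_) : Prop :=
  exists r, ray r /\ ray_equiv r (proj1_sig xi) /\ forall n, subtree x (r n).

Definition confluent (xi eta : End_) (v : V) : Prop :=
  exists k, proj1_sig xi k = v /\ proj1_sig eta k = v /\
            proj1_sig xi (S k) <> proj1_sig eta (S k).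

Definition ultrametric (d : End_ -> End_ -> R) : Prop :=
  (forall xi eta, d xi eta = 0 <-> xi = eta) /\
  (forall xi eta, 0 <= d xi eta) /\
  (forall xi eta, d xi eta = d eta xi) /\
  (forall xi eta zeta, d xi zeta <= Rmax (d xi eta) (d eta zeta)).

Definition closed_ball (d : End_ -> End_ -> R) (xi : End_) (r : R) (eta : End_) : Prop :=
  d xi eta <= r.

Definition balls_are_subtrees (d : End_ -> End_ -> R) : Prop :=
  (forall xi r, 0 < r -> exists x, forall eta, closed_ball d xi r eta <-> bdry_sub x eta) /\
  (forall x, exists xi r, 0 < r /\ forall eta, closed_ball d xi r eta <-> bdry_sub x eta).

Definition ultrametric_element (phi : V -> R) : Prop :=
  (forall x, 0 < phi x) /\
  (forall x, x <> o -> phi (par x) > phi x) /\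
  (forall r : nat -> V, ray r ->
     forall eps, 0 < eps -> exists N, forall n, (N <= n)%nat -> Rabs (phi (r n)) < eps).

Definition induced_by (phi : V -> R) (d : End_ -> End_ -> R) : Prop :=
  (forall xi, d xi xi = 0) /\
  (forall xi eta, xi <> eta -> forall v, confluent xi eta v -> d xi eta = phi v).

End Tree.

(* Main.v *)
Require Import Defs.
From Stdlib Require Import Reals List.
From Stdlib Require Import Arith Lia Lra FinFun Classical ClassicalEpsilon ProofIrrelevance.
Open Scope R_scope.

Section Aux.
Variables (V : Type) (o : V) (par : V -> V).
Hypothesis Htree : rooted_tree o par.

Lemma L0 {f : nat -> V} : ray_from_o o par f ->
  forall i p, (i <= p)%nat -> Nat.iter i par (f p) = f (p - i)%nat.
Proof.
  intros [H0 Hc] i. induction i as [|i IH]; intros p Hp.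
  - simpl. f_equal. lia.
  - simpl. rewrite IH by lia.
    replace (p - i)%nat with (S (p - S i)) by lia.
    destruct (Hc (p - S i)%nat) as [_ E]. exact E.
Qed.

Lemma L0b {f : nat -> V} : ray_from_o o par f -> forall p, (1 <= p)%nat -> f p <> o.
Proof.
  intros [H0 Hc] p Hp. destruct p as [|p]; [lia|]. destruct (Hc p) as [E _]; exact E.
Qed.

Lemma L1 {f g : nat -> V} : ray_from_o o par f -> ray_from_o o par g ->
  forall p q, f p = g q -> p = q.
Proof.
  intros Hf Hg.
  assert (A : forall (f g : nat -> V), ray_from_o o par f -> ray_from_o o par g ->
     forall p q, f p = g q -> ~ (p < q)%nat).
  { intros f' g' Hf' Hg' p q E Hlt.
    pose proof (L0 Hf' p p (le_n _)) as E1.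
    pose proof (L0 Hg' p q (Nat.lt_le_incl _ _ Hlt)) as E2.
    rewrite E in E1. rewrite E1 in E2. replace (p - p)%nat with 0%nat in E2 by lia.
    destruct Hf' as [H0 _]. rewrite H0 in E2.
    apply (L0b Hg' (q - p)). lia. auto. }
  intros p q E. destruct (Nat.lt_trichotomy p q) as [h|[h|h]]; auto.
  - exfalso; exact (A f g Hf Hg p q E h).
  - exfalso; exact (A g f Hg Hf q p (eq_sym E) h).
Qed.

Lemma L2 {f g : nat -> V} : ray_from_o o par f -> ray_from_o o par g ->
  forall p, f p = g p -> forall i, (i <= p)%nat -> f i = g i.
Proof.
  intros Hf Hg p E i Hi.
  pose proof (L0 Hf (p - i) p ltac:(lia)) as E1.
  pose proof (L0 Hg (p - i) p ltac:(lia)) as E2.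
  replace (p - (p - i))%nat with i in E1, E2 by lia.
  rewrite <- E1, <- E2, E. reflexivity.
Qed.

Lemma iter_fix n : Nat.iter n par o = o.
Proof. destruct Htree as [Ho _]. induction n; simpl; [reflexivity|]. rewrite IHn; exact Ho. Qed.

Lemma bdry_char (x : V) (xi : End_ o par) :
  @bdry_sub V o par x xi <-> exists k, proj1_sig xi k = x.
Proof.
  destruct xi as [f Hf]; simpl. split.
  - intros [r [[Rinj Radj] [[l Hl] Hsub]]].
    assert (Hn : exists n, ~ In (r n) l).
    { apply NNPP; intro N.
      assert (Hincl : incl (map r (seq 0 (S (length l)))) l).
      { intros v Hv. apply in_map_iff in Hv. destruct Hv as [n [<- _]].
        apply NNPP; intro N'; apply N; exists n; exact N'. }
      apply NoDup_incl_length in Hincl.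
      - rewrite length_map, length_seq in Hincl. lia.
      - apply Injective_map_NoDup; [exact Rinj | apply seq_NoDup]. }
    destruct Hn as [n Hn].
    assert (Hm : in_range f (r n)).
    { apply NNPP; intro N. apply Hn, Hl. left. split; [exists n; reflexivity | exact N]. }
    destruct Hm as [m Em].
    destruct (Hsub n) as [j Ej]. rewrite <- Em in Ej.
    destruct (le_lt_dec j m) as [h|h].
    + exists (m - j)%nat. rewrite <- (L0 Hf j m h). exact Ej.
    + exists 0%nat. replace j with ((j - m) + m)%nat in Ej by lia.
      rewrite Nat.iter_add, (L0 Hf m m (le_n _)), Nat.sub_diag in Ej.
      pose proof Hf as [H0 _]. rewrite H0, iter_fix in Ej. rewrite H0. exact Ej.
  - intros [k Ek]. exists (fun n => f (n + k)%nat). split; [split|split].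
    + intros m n E. apply (L1 Hf Hf) in E. lia.
    + intros n. left. pose proof Hf as [_ Hc]. exact (Hc (n + k)%nat).
    + exists (map f (seq 0 k)). intros v [[[n En] N]|[[m Em] N]].
      * exfalso; apply N; exists (n + k)%nat; exact En.
      * destruct (le_lt_dec k m) as [h|h].
        -- exfalso; apply N; exists (m - k)%nat. simpl in Em. rewrite <- Em. f_equal. lia.
        -- simpl in Em. rewrite <- Em. apply in_map. apply in_seq. lia.
    + intros n. exists n. rewrite (L0 Hf n (n + k) ltac:(lia)). rewrite <- Ek. f_equal. lia.
Qed.


Lemma min_depth x : exists N, Nat.iter N par x = o /\
  forall i, (i < N)%nat -> Nat.iter i par x <> o.
Proof.
  destruct Htree as [_ H]. destruct (H x) as [n Hn].
  induction n as [n IH] using lt_wf_ind.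
  destruct (classic (exists i, (i < n)%nat /\ Nat.iter i par x = o)) as [[i [Hi Ei]]|N].
  - exact (IH i Hi Ei).
  - exists n. split; [exact Hn|]. intros i Hi E. apply N. exists i. auto.
Qed.

Lemma end_from (x : V) (s : nat -> V) : s 0%nat = x ->
  (forall j, child o par (s j) (s (S j))) ->
  exists xi : End_ o par, exists N, forall j, proj1_sig xi (N + j)%nat = s j.
Proof.
  intros Hs0 Hs. destruct (min_depth x) as [N [HN Hmin]].
  set (g := fun k => if Nat.leb k N then Nat.iter (N - k) par x else s (k - N)%nat).
  assert (Hg : ray_from_o o par g).
  { split.
    - unfold g. simpl. rewrite Nat.sub_0_r. exact HN.
    - intros n. unfold g.
      destruct (Nat.leb_spec (S n) N) as [h|h].
      + destruct (Nat.leb_spec n N) as [h'|h']; [|lia].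
        split.
        * apply Hmin. lia.
        * replace (N - n)%nat with (S (N - S n)) by lia. reflexivity.
      + destruct (Nat.leb_spec n N) as [h'|h'].
        * assert (n = N) by lia. subst n. rewrite Nat.sub_diag. change (Nat.iter 0 par x) with x.
          replace (S N - N)%nat with 1%nat by lia. rewrite <- Hs0. apply Hs.
        * replace (S n - N)%nat with (S (n - N)) by lia. apply Hs. }
  exists (exist _ g Hg), N. intros j. simpl. unfold g.
  destruct (Nat.leb_spec (N + j) N) as [h|h].
  - assert (j = 0%nat) by lia. subst j. rewrite Nat.add_0_r, Nat.sub_diag. simpl. auto.
  - f_equal. lia.
Qed.

Lemma ray_forward (r : nat -> V) : ray o par r ->
  exists n0, forall j, child o par (r (n0 + j)%nat) (r (S (n0 + j))).
Proof.
  intros [Rinj Radj].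
  assert (Step : forall n, child o par (r n) (r (S n)) -> child o par (r (S n)) (r (S (S n)))).
  { intros n [Hn1 Hn2]. destruct (Radj (S n)) as [h|[h1 h2]]; [exact h|].
    exfalso. rewrite Hn2 in h2. apply Rinj in h2. lia. }
  assert (Ex : exists n0, child o par (r n0) (r (S n0))).
  { apply NNPP; intro N.
    assert (Up : forall n, r n <> o /\ r n = Nat.iter n par (r 0%nat)).
    { induction n as [|n [IH1 IH2]].
      - split; [|reflexivity].
        destruct (Radj 0%nat) as [h|[h1 h2]]; [exfalso; apply N; eauto|]. exact h1.
      - destruct (Radj n) as [h|[h1 h2]]; [exfalso; apply N; eauto|].
        split.
        + destruct (Radj (S n)) as [h'|[h1' h2']]; [exfalso; apply N; eauto|]. exact h1'.
        + simpl. rewrite <- IH2. symmetry. exact h2. }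
    destruct Htree as [_ H]. destruct (H (r 0%nat)) as [m Hm].
    destruct (Up m) as [U1 U2]. apply U1. rewrite U2. exact Hm. }
  destruct Ex as [n0 H0]. exists n0. intros j. induction j as [|j IH].
  - rewrite Nat.add_0_r. exact H0.
  - rewrite Nat.add_succ_r. apply Step. exact IH.
Qed.

End Aux.
Arguments L0 {V o par f}.
Arguments L0b {V o par f}.
Arguments L1 {V o par f g}.
Arguments L2 {V o par f g}.
Arguments bdry_char {V o par} Htree x xi.
Arguments end_from {V o par} Htree x s.
Arguments ray_forward {V o par} Htree r.

Section Main.
Variables (V : Type) (o : V) (par : V -> V).
Hypothesis Htree : rooted_tree o par.
Variable d : End_ o par -> End_ o par -> R.
Hypothesis Hd : ultrametric d.
Hypothesis Hballs : balls_are_subtrees d.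

Lemma ball1 xi t : 0 < t -> exists y, forall eta : End_ o par,
  d xi eta <= t <-> exists k, proj1_sig eta k = y.
Proof.
  intros Ht. destruct (proj1 Hballs xi t Ht) as [y Hy]. exists y. intros eta.
  rewrite <- (bdry_char Htree). apply Hy.
Qed.

Lemma dpos (xi eta : End_ o par) k : proj1_sig xi k <> proj1_sig eta k -> 0 < d xi eta.
Proof.
  intros Hk. destruct Hd as [H0 [Hnn _]].
  destruct (Rle_lt_or_eq_dec 0 (d xi eta) (Hnn xi eta)) as [h|h]; [exact h|].
  exfalso. apply Hk. symmetry in h. apply H0 in h. subst. reflexivity.
Qed.

Lemma dsym xi eta : d xi eta = d eta xi.
Proof. destruct Hd as [_ [_ [H _]]]. apply H. Qed.

Lemma dtri xi eta zeta : d xi zeta <= Rmax (d xi eta) (d eta zeta).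
Proof. destruct Hd as [_ [_ [_ H]]]. apply H. Qed.

Lemma Lball (xi' eta' zeta : End_ o par) k :
  proj1_sig xi' k = proj1_sig eta' k -> proj1_sig xi' (S k) <> proj1_sig eta' (S k) ->
  proj1_sig zeta k = proj1_sig xi' k -> d xi' zeta <= d xi' eta'.
Proof.
  intros E1 E2 E3.
  pose proof (dpos _ _ _ E2) as Ht.
  destruct (ball1 xi' _ Ht) as [y Hy].
  destruct (proj1 (Hy xi') (Rle_trans _ _ _ (Req_le _ _ (proj2 (proj1 Hd xi' xi') eq_refl)) (Rlt_le _ _ Ht)))
    as [m Hm].
  destruct (proj1 (Hy eta') (Rle_refl _)) as [m2 Hm2].
  pose proof (proj2_sig xi') as Rx. pose proof (proj2_sig eta') as Re.
  pose proof (proj2_sig zeta) as Rz.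
  assert (m2 = m). { apply (L1 Re Rx). rewrite Hm, Hm2. reflexivity. } subst m2.
  assert (Hmk : (m <= k)%nat).
  { destruct (le_lt_dec m k) as [h|h]; [exact h|]. exfalso. apply E2.
    apply (L2 Rx Re m); [rewrite Hm, Hm2; reflexivity| lia]. }
  apply Hy. exists m. rewrite <- Hm. apply (L2 Rz Rx k E3). exact Hmk.
Qed.

Lemma Lconf (xi eta xi' eta' : End_ o par) k k' :
  proj1_sig xi k = proj1_sig xi' k' -> proj1_sig eta k = proj1_sig xi k ->
  proj1_sig xi (S k) <> proj1_sig eta (S k) ->
  proj1_sig eta' k' = proj1_sig xi' k' -> proj1_sig xi' (S k') <> proj1_sig eta' (S k') ->
  d xi eta <= d xi' eta'.
Proof.
  intros E1 E2 E3 E4 E5.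
  pose proof (proj2_sig xi) as Rx. pose proof (proj2_sig xi') as Rx'.
  assert (k = k') by exact (L1 Rx Rx' k k' E1). subst k'.
  eapply Rle_trans; [apply (dtri xi xi' eta)|]. apply Rmax_lub.
  - rewrite dsym. apply (Lball _ _ _ k); auto.
  - apply (Lball _ _ _ k); auto. congruence.
Qed.

End Main.
Arguments ball1 {V o par} Htree {d} Hballs xi t.
Arguments dpos {V o par d} Hd xi eta k.
Arguments dsym {V o par d} Hd xi eta.
Arguments dtri {V o par d} Hd xi eta zeta.
Arguments Lball {V o par} Htree {d} Hd Hballs xi' eta' zeta k.
Arguments Lconf {V o par} Htree {d} Hd Hballs xi eta xi' eta' k k'.

Lemma pred_pos {V : Type} {o : V} {par : V -> V} (xi : End_ o par) N y :
  proj1_sig xi N = y -> y <> o -> exists k, N = S k /\ proj1_sig xi k = par y.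
Proof.
  intros E Hy. destruct (proj2_sig xi) as [H0 Hc]. destruct N as [|k].
  - exfalso. apply Hy. rewrite <- E. exact H0.
  - exists k. split; [reflexivity|]. rewrite <- E. symmetry. apply (Hc k).
Qed.

Theorem lemma2p2 (V : Type) (o : V) (par : V -> V)
  (Htree : @rooted_tree V o par)
  (Hlf : @locally_finite V o par)
  (Hinf : infinite_tree V)
  (Hdeg : forall x, @fdeg_ge2 V o par x)
  (d : @End_ V o par -> @End_ V o par -> R)
  (Hd : @ultrametric V o par d)
  (Hballs : @balls_are_subtrees V o par d) :
  exists phi : V -> R, @ultrametric_element V o par phi /\ @induced_by V o par phi d.
Proof.
  assert (Hdeg' : forall x, exists p : V * V, fst p <> snd p /\
            child o par x (fst p) /\ child o par x (snd p)).
  { intro x; destruct (Hdeg x) as [a [b H]]; exists (a, b); exact H. }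
  set (cp := fun x => proj1_sig (constructive_indefinite_description _ (Hdeg' x))).
  assert (Hcp : forall x, fst (cp x) <> snd (cp x) /\
            child o par x (fst (cp x)) /\ child o par x (snd (cp x))).
  { intro x. exact (proj2_sig (constructive_indefinite_description _ (Hdeg' x))). }
  set (c1 := fun x => fst (cp x)). set (c2 := fun x => snd (cp x)).
  assert (HE : forall y, exists xi : End_ o par, exists N, proj1_sig xi N = y).
  { intro y.
    destruct (end_from Htree y (fun j => Nat.iter j c1 y) eq_refl) as [xi [N HN]].
    - intros j. simpl. apply (Hcp (Nat.iter j c1 y)).
    - exists xi, N. rewrite <- (Nat.add_0_r N). apply HN. }
  set (E := fun y => proj1_sig (constructive_indefinite_description _ (HE y))).
  assert (HEs : forall y, exists N, proj1_sig (E y) N = y).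
  { intro y. exact (proj2_sig (constructive_indefinite_description _ (HE y))). }
  assert (Kx : forall x, exists k, proj1_sig (E (c1 x)) k = x /\ proj1_sig (E (c2 x)) k = x /\
     proj1_sig (E (c1 x)) (S k) = c1 x /\ proj1_sig (E (c2 x)) (S k) = c2 x).
  { intro x. destruct (Hcp x) as [_ [[h1 h1'] [h2 h2']]].
    destruct (HEs (c1 x)) as [N1 HN1]. destruct (HEs (c2 x)) as [N2 HN2].
    destruct (pred_pos _ _ _ HN1 h1) as [k1 [-> Hk1]].
    destruct (pred_pos _ _ _ HN2 h2) as [k2 [-> Hk2]].
    change (par (c1 x) = x) in h1'. change (par (c2 x) = x) in h2'. rewrite h1' in Hk1. rewrite h2' in Hk2.
    assert (k1 = k2).
    { apply (L1 (proj2_sig (E (c1 x))) (proj2_sig (E (c2 x)))). congruence. }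
    subst k2. exists k1. auto. }
  assert (Hc12 : forall x, c1 x <> c2 x) by (intro x; exact (proj1 (Hcp x))).
  set (phi := fun x => d (E (c1 x)) (E (c2 x))).
  assert (Hpos : forall x, 0 < phi x).
  { intro x. destruct (Kx x) as [k [_ [_ [e1 e2]]]]. apply (dpos Hd _ _ (S k)).
    rewrite e1, e2. apply Hc12. }
  assert (Hconf : forall (xi eta : End_ o par) k, proj1_sig eta k = proj1_sig xi k ->
      proj1_sig xi (S k) <> proj1_sig eta (S k) -> d xi eta = phi (proj1_sig xi k)).
  { intros xi eta k Ek Nk. destruct (Kx (proj1_sig xi k)) as [k' [e1 [e2 [e3 e4]]]].
    apply Rle_antisym.
    - apply (Lconf Htree Hd Hballs xi eta _ _ k k'); try congruence;
      rewrite e3, e4; apply Hc12.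
    - apply (Lconf Htree Hd Hballs _ _ xi eta k' k); try congruence;
      rewrite e3, e4; apply Hc12. }
  exists phi. split; [split; [exact Hpos| split]|].
  -
    intros x Hx. destruct (Kx x) as [k [e1 [e2 [e3 e4]]]].
    set (xi := E (c1 x)) in *. set (E2 := E (c2 x)) in *.
    destruct (pred_pos xi k x e1 Hx) as [i [-> Hi]].
    assert (Hs : exists s, s <> x /\ child o par (par x) s).
    { destruct (Hcp (par x)) as [n12 [hc1 hc2]].
      destruct (classic (fst (cp (par x)) = x)) as [h|h].
      - exists (snd (cp (par x))). split; [congruence|exact hc2].
      - exists (fst (cp (par x))). auto. }
    destruct Hs as [s [Hsx [Hs1 Hs2]]].
    destruct (HEs s) as [M HM]. set (eta := E s) in *.
    destruct (pred_pos eta M s HM Hs1) as [i' [-> Hi']].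
    rewrite Hs2 in Hi'.
    assert (i' = i).
    { apply (L1 (proj2_sig eta) (proj2_sig xi)). congruence. } subst i'.
    assert (Hp : d xi eta = phi (par x)).
    { rewrite <- Hi. apply Hconf; [congruence|]. rewrite e1, HM. auto. }
    unfold Rgt. rewrite <- Hp. change (phi x) with (d xi E2).
    destruct (proj2 Hballs x) as [zeta [r [Hr Hz]]].
    assert (Hz' : forall th : End_ o par, d zeta th <= r <-> exists k, proj1_sig th k = x).
    { intro th. rewrite <- (bdry_char Htree). apply Hz. }
    apply Rnot_le_lt. intro Hle.
    assert (A1 : d zeta xi <= r) by (apply Hz'; eauto).
    assert (A2 : d zeta E2 <= r) by (apply Hz'; eauto).
    assert (A3 : d xi E2 <= r).
    { eapply Rle_trans; [apply (dtri Hd xi zeta E2)|]. apply Rmax_lub; auto.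
      rewrite (dsym Hd). exact A1. }
    assert (A4 : d zeta eta <= r).
    { eapply Rle_trans; [apply (dtri Hd zeta xi eta)|]. apply Rmax_lub; auto. lra. }
    apply Hz' in A4. destruct A4 as [k0 Hk0].
    assert (k0 = S i).
    { apply (L1 (proj2_sig eta) (proj2_sig xi)). congruence. }
    subst k0. apply Hsx. congruence.
  -
    intros r Hr eps Heps.
    destruct (ray_forward Htree r Hr) as [n0 Hn0].
    destruct (end_from Htree (r n0) (fun j => r (n0 + j)%nat)) as [xi [N HN]].
    + simpl. rewrite Nat.add_0_r. reflexivity.
    + intros j. simpl. rewrite Nat.add_succ_r. apply Hn0.
    + assert (He2 : 0 < eps / 2) by lra.
      destruct (ball1 Htree Hballs xi _ He2) as [y Hy].
      assert (Hm : exists m, proj1_sig xi m = y).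
      { apply Hy. rewrite (proj2 (proj1 Hd xi xi) eq_refl). lra. }
      destruct Hm as [m Hm].
      exists (n0 + m)%nat. intros n Hn.
      assert (Ex : r n = proj1_sig xi (N + (n - n0))%nat).
      { rewrite HN. f_equal. lia. }
      destruct (Kx (r n)) as [k [e1 [e2 _]]].
      assert (k = (N + (n - n0))%nat).
      { apply (L1 (proj2_sig (E (c1 (r n)))) (proj2_sig xi)). congruence. } subst k.
      assert (B1 : d xi (E (c1 (r n))) <= eps / 2).
      { apply Hy. exists m. rewrite <- Hm.
        apply (L2 (proj2_sig (E (c1 (r n)))) (proj2_sig xi) (N + (n - n0))%nat); [congruence|lia]. }
      assert (B2 : d xi (E (c2 (r n))) <= eps / 2).
      { apply Hy. exists m. rewrite <- Hm.
        apply (L2 (proj2_sig (E (c2 (r n)))) (proj2_sig xi) (N + (n - n0))%nat); [congruence|lia]. }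
      assert (B : phi (r n) <= eps / 2).
      { unfold phi. eapply Rle_trans; [apply (dtri Hd _ xi _)|]. apply Rmax_lub; auto.
        rewrite (dsym Hd). exact B1. }
      rewrite Rabs_pos_eq by (apply Rlt_le, Hpos). lra.
  - split.
    + intro xi. exact (proj2 (proj1 Hd xi xi) eq_refl).
    + intros xi eta Hne v [k [e1 [e2 e3]]].
      rewrite <- e1. apply Hconf; [congruence|exact e3].
Qed.
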